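(* Let $X$ be a finite connected poset of length $1$. Then $\mathcal{M}(X)=\mathcal{P}(X)$ if and only if $|\mathrm{Min}(X)|=1$ or $|\mathrm{Max}(X)|=1$.
   Context: The length of $X$ is the maximum of $|C|-1$ over chains $C\subseteq X$. $\mathrm{Min}(X)$, $\mathrm{Max}(X)$ are the sets of minimal and maximal elements. For $x<y$, $e_{xy}$ denotes the incidence-algebra basis element and $B=\{e_{xy}:x<y\}$. $\mathcal{C}(X)$ is the set of maximal chains. For a bijection $\theta:B\to B$ and $C:u_1<\dots<u_m$ in $\mathcal{C}(X)$, $\theta$ is increasing on $C$ if there is $D:v_1<\dots<v_m$ in $\mathcal{C}(X)$ with $\theta(e_{u_iu_j})=e_{v_iv_j}$ for all $i<j$, decreasing if $\theta(e_{u_iu_j})=e_{v_{m-j+1}v_{m-i+1}}$ for all $i<j$. $\mathcal{M}(X)$ is the set of bijections $B\to B$ increasing or decreasing on every maximal chain. $\theta:B\to B$ is proper if there is an automorphism $\lambda$ of $X$ with $\theta(e_{xy})=e_{\lambda(x)\lambda(y)}$ for all $x<y$, or an anti-automorphism $\lambda$ of $X$ with $\theta(e_{xy})=e_{\lambda(y)\lambda(x)}$ for all $x<y$; $\mathcal{P}(X)$ is the set of proper bijections. *)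

(* Defs.v *)
From HB Require Import structures.
From mathcomp Require Import all_boot all_order fingroup perm.
Set Implicit Arguments. Unset Strict Implicit. Unset Printing Implicit Defensive.
Import Order.Theory.
Local Open Scope order_scope.

Section PosetDefs.
Context {d : Order.disp_t} (X : finPOrderType d).

Definition is_chain (C : {set X}) : bool :=
  [forall x in C, forall y in C, x >=< y].

Definition poset_length : nat := (\max_(C : {set X} | is_chain C) #|C|).-1.

Definition poset_connected : Prop :=
  forall x y : X, connect (fun a b : X => a >=< b) x y.

Definition Min_set : {set X} := [set x : X | [forall y : X, ~~ (y < x)]].
Definition Max_set : {set X} := [set x : X | [forall y : X, ~~ (x < y)]].

Definition is_maxchain (C : {set X}) : bool :=
  is_chain C && [forall D : {set X}, (C \proper D) ==> ~~ is_chain D].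

(* a maximal chain u_1 < ... < u_m, given as its strictly increasing listing *)
Definition maxchain_seq (s : seq X) : bool :=
  sorted <%O s && is_maxchain [set x in s].

(* B = {e_xy : x < y}, e_xy represented by the pair (x, y) *)
Definition Bt : finType := {p : X * X | p.1 < p.2}.

(* theta increasing on the maximal chain s (0-indexed):
   exists maximal chain t with theta(e_{s_i s_j}) = e_{t_i t_j} for i < j *)
Definition increasing_on (th : Bt -> Bt) (s : seq X) : Prop :=
  exists t : seq X, [/\ maxchain_seq t, size t = size s &
    forall (b : Bt) (i j : nat), i < j < size s ->
      val b = (nth (val b).1 s i, nth (val b).1 s j) ->
      val (th b) = (nth (val b).1 t i, nth (val b).1 t j)]%N.

(* decreasing: theta(e_{u_i u_j}) = e_{v_{m-j+1} v_{m-i+1}} (1-indexed),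
   i.e. 0-indexed e_{t_(m-1-j) t_(m-1-i)} *)
Definition decreasing_on (th : Bt -> Bt) (s : seq X) : Prop :=
  exists t : seq X, [/\ maxchain_seq t, size t = size s &
    forall (b : Bt) (i j : nat), i < j < size s ->
      val b = (nth (val b).1 s i, nth (val b).1 s j) ->
      val (th b) = (nth (val b).1 t (size s - 1 - j),
                    nth (val b).1 t (size s - 1 - i))]%N.

Definition in_M (th : Bt -> Bt) : Prop :=
  forall s : seq X, maxchain_seq s -> increasing_on th s \/ decreasing_on th s.

Definition in_P (th : Bt -> Bt) : Prop :=
  (exists lam : {perm X}, (forall x y : X, (lam x <= lam y) = (x <= y)) /\
     forall b : Bt, val (th b) = (lam (val b).1, lam (val b).2)) \/
  (exists lam : {perm X}, (forall x y : X, (lam x <= lam y) = (y <= x)) /\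
     forall b : Bt, val (th b) = (lam (val b).2, lam (val b).1)).

End PosetDefs.

(* Main.v *)
Require Import Defs.
From HB Require Import structures.
From mathcomp Require Import all_boot all_order fingroup perm.
Import Order.Theory.
Set Implicit Arguments. Unset Strict Implicit. Unset Printing Implicit Defensive.
Local Open Scope order_scope.

Lemma maxlen2 d (X : finPOrderType d) : poset_length X = 1%N ->
  \max_(C : {set X} | is_chain C) #|C| = 2%N.
Proof. rewrite /poset_length; case: (\max_(C : {set X} | is_chain C) #|C|) => [|[|n]] //= -> //. Qed.

Lemma chain_le2 d (X : finPOrderType d) : poset_length X = 1%N ->
  forall C : {set X}, is_chain C -> (#|C| <= 2)%N.
Proof. move=> /maxlen2 <- C HC; exact: leq_bigmax_cond. Qed.

Lemma no3 d (X : finPOrderType d) : poset_length X = 1%N ->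
  forall x y z : X, x < y -> y < z -> False.
Proof.
move=> /chain_le2 H x y z xy yz.
have xz := lt_trans xy yz.
have Hc : is_chain [set x; y; z].
  apply/forallP => u; apply/implyP => Hu; apply/forallP => v; apply/implyP => Hv.
  rewrite !inE in Hu Hv.
  by case/orP: Hu => [/orP[/eqP->|/eqP->]|/eqP->]; case/orP: Hv => [/orP[/eqP->|/eqP->]|/eqP->];
    rewrite /Order.comparable ?lexx ?(ltW xy) ?(ltW yz) ?(ltW xz) ?orbT.
have := H _ Hc.
rewrite -setUA cardsU1 cards2 !inE (lt_eqF xy) (lt_eqF xz) (lt_eqF yz) //.
Qed.

Lemma has_edge d (X : finPOrderType d) : poset_length X = 1%N ->
  exists a b : X, a < b.
Proof.
move=> /maxlen2 H.
have [C HC HM] : {C | C \in (@is_chain d X : pred {set X}) & \max_(C in (@is_chain d X : pred {set X})) #|C| = #|C| }.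
  apply: eq_bigmax_cond; apply/card_gt0P; exists set0.
  by rewrite unfold_in /is_chain; apply/forallP => u; rewrite inE.
have /cards2P [x [y [xy CE]]] : #|C| == 2%N.
  by rewrite -HM -H; apply/eqP/eq_bigl => ?; rewrite unfold_in.
move: HC; rewrite CE unfold_in => /forallP /(_ x) /implyP; rewrite !inE eqxx => /(_ isT).
move/forallP /(_ y) /implyP; rewrite !inE eqxx orbT => /(_ isT).
case/comparable_ltgtP => [h|h|h]; [by exists x, y | by exists y, x | by rewrite h eqxx in xy].
Qed.

Lemma closed_all d (X : finPOrderType d) : poset_connected X ->
  forall S : {set X}, (forall x y, x \in S -> x >=< y -> y \in S) ->
  forall a, a \in S -> forall z, z \in S.
Proof.
move=> conn S H a Ha z.
have cl : closed (fun a b : X => a >=< b) S.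
  move=> x y xy; apply/idP/idP => [/H|/H]; [exact | apply]; by rewrite comparable_sym.
by rewrite -(closed_connect cl (conn a z)).
Qed.

Lemma pair_set d (X : finPOrderType d) (u v : X) : [set z in [:: u; v]] = [set u; v].
Proof. by apply/setP => z; rewrite !inE. Qed.

Lemma pair_maxchain d (X : finPOrderType d) : poset_length X = 1%N ->
  forall u v : X, u < v -> maxchain_seq [:: u; v].
Proof.
move=> len u v uv; rewrite /maxchain_seq /= uv /= pair_set.
apply/andP; split.
  apply/forallP => x; apply/implyP => Hx; apply/forallP => y; apply/implyP => Hy.
  rewrite !inE in Hx Hy.
  by case/orP: Hx => /eqP->; case/orP: Hy => /eqP->;
    rewrite /Order.comparable ?lexx ?(ltW uv) ?orbT.
apply/forallP => D; apply/implyP => pr; apply/negP => HD.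
have := chain_le2 len HD; have := proper_card pr.
rewrite cards2 (lt_eqF uv) /=; case: #|D| => [|[|[|n]]] //.
Qed.

Lemma allM d (X : finPOrderType d) : poset_connected X -> poset_length X = 1%N ->
  forall th : Bt X -> Bt X, in_M th.
Proof.
move=> conn len th s /andP [Hs Hmc].
case: s Hs Hmc => [|x [|y [|z s]]] Hs Hmc.
- exfalso; have [a [b ab]] := has_edge len.
  move: Hmc => /andP [_ /forallP /(_ [set a]) /implyP H].
  have P2 : is_chain [set a].
    apply/forallP => u; apply/implyP => Hu; apply/forallP => w; apply/implyP => Hw.
    by rewrite !inE in Hu Hw; rewrite (eqP Hu) (eqP Hw) comparablexx.
  have P1 : [set x in [::]] \proper [set a].
    by apply/properP; split; [apply/subsetP => ?; rewrite inE | exists a; rewrite !inE].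
  by move: (H P1); rewrite P2.
- exfalso; have [a [b ab]] := has_edge len.
  case: (boolP [exists y, (y != x) && (x >=< y)]) => [/existsP [y /andP [yx xy]]|/existsPn Hn].
    move: Hmc => /andP [_ /forallP /(_ [set x; y]) /implyP H].
    have P2 : is_chain [set x; y].
      apply/forallP => u; apply/implyP => Hu; apply/forallP => w; apply/implyP => Hw.
      rewrite !inE in Hu Hw.
      by case/orP: Hu => /eqP->; case/orP: Hw => /eqP->;
        rewrite ?comparablexx // comparable_sym.
    have P1 : [set z in [:: x]] \proper [set x; y].
      apply/properP; split; first by apply/subsetP => u; rewrite !inE => ->.
      by exists y; rewrite !inE ?eqxx ?orbT // (negbTE yx).
    by move: (H P1); rewrite P2.
  have H : forall u w, u \in [set x] -> u >=< w -> w \in [set x].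
    move=> u w; rewrite !inE => /eqP -> xw; apply/negPn/negP => wx.
    by have := Hn w; rewrite wx xw.
  have Ha := closed_all conn H (set11 x) a; have Hb := closed_all conn H (set11 x) b.
  by rewrite !inE in Ha Hb; rewrite (eqP Ha) (eqP Hb) ltxx in ab.
- left; move: Hs => /= /andP [xy _].
  pose b0 : Bt X := Sub (x, y) xy.
  exists [:: (val (th b0)).1; (val (th b0)).2]; split => //.
    exact: pair_maxchain len _ _ (valP (th b0)).
  move=> b i j /andP [ij j2] Hb.
  have E1 : i = 0%N by case: (i) ij j2 => [|[|i']] //; case: (j) => [|[|j']].
  have E2 : j = 1%N by case: (j) ij j2 => [|[|j']] //; case: (i).
  subst i j.
  have Eb : b = b0 by apply: val_inj; rewrite Hb.
  by rewrite Eb /=; case: (\val (th b0)).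
- exfalso; move: Hs => /= /andP [xy /andP [yz _]].
  exact: (@no3 d X len x y z xy yz).
Qed.

Lemma noP4 d (X : finPOrderType d) :
  (forall th : {perm Bt X}, in_P (fun b => th b)) ->
  forall a1 b1 a2 b2 : X, a1 < b1 -> a2 < b1 -> a2 < b2 -> a1 != a2 -> b1 != b2 -> False.
Proof.
move=> HP a1 b1 a2 b2 h1 h2 h3 n12 nb.
pose e1 : Bt X := Sub (a1, b1) h1.
pose e2 : Bt X := Sub (a2, b1) h2.
pose e3 : Bt X := Sub (a2, b2) h3.
have E3 : tperm e1 e2 e3 = e3.
  apply: tpermD; apply/negP => /eqP/(congr1 val); rewrite /= => -[].
    by move=> E _; rewrite E eqxx in n12.
  by move=> E; rewrite E eqxx in nb.
have E1 : tperm e1 e2 e1 = e2 by rewrite tpermL.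
have E2 : tperm e1 e2 e2 = e1 by rewrite tpermR.
case: (HP (tperm e1 e2)) => [[lam [_ Hl]] | [lam [_ Hl]]].
- have := Hl e3; rewrite E3 /= => -[A _].
  have := Hl e1; rewrite E1 /= => -[B _].
  have : lam a1 = lam a2 by rewrite -A -B.
  by move/perm_inj => E; rewrite E eqxx in n12.
- have := Hl e3; rewrite E3 /= => -[_ A].
  have := Hl e2; rewrite E2 /= => -[_ B].
  by move: nb; rewrite A B eqxx.
Qed.

Lemma starP_min d (X : finPOrderType d) : poset_length X = 1%N ->
  #|Min_set X| = 1%N -> forall th : {perm Bt X}, in_P (fun b => th b).
Proof.
move=> len /eqP/cards1P [r Hr] th.
have minE : forall z : X, (forall w, ~~ (w < z)) -> z = r.
  move=> z Hz; have : z \in Min_set X by rewrite inE; apply/forallP.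
  by rewrite Hr inE => /eqP.
have edge1 : forall b : Bt X, (val b).1 = r.
  move=> b; apply: minE => w; apply/negP => wb.
  exact: (@no3 d X len _ _ _ wb (valP b)).
have rlt : forall y : X, y != r -> r < y.
  move=> y yr; case: (boolP [forall w, ~~ (w < y)]) => [/forallP H|].
    by rewrite (minE y H) eqxx in yr.
  rewrite negb_forall => /existsP [z]; rewrite negbK => zy.
  suff <- : z = r by [].
  apply: minE => w; apply/negP => wz; exact: (@no3 d X len _ _ _ wz zy).
pose f (y : X) : X := if insub (r, y) is Some b then (val (th b : Bt X)).2 else r.
have fr : f r = r by rewrite /f insubF // ltxx.
have fE : forall y (h : (r, y).1 < (r, y).2), f y = (val (th (Sub (r, y) h : Bt X))).2.
  by move=> y h; rewrite /f insubT.
have fn : forall y, y != r -> f y != r.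
  move=> y yr; rewrite (fE y (rlt y yr)).
  set c := th _; have h : r < (val c).2 by rewrite -{1}(edge1 c); exact: valP c.
  by rewrite eq_sym (lt_eqF h).
have finj : injective f.
  move=> x y.
  case: (eqVneq x r) => [->|xr]; case: (eqVneq y r) => [->|yr] //.
  - by rewrite fr => E; have := fn y yr; rewrite -E eqxx.
  - by rewrite fr => E; have := fn x xr; rewrite E eqxx.
  rewrite (fE x (rlt x xr)) (fE y (rlt y yr)) => E.
  set cx := th _ in E; set cy := th _ in E.
  have : cx = cy.
    apply: val_inj; rewrite [val cx]surjective_pairing [val cy]surjective_pairing.
    by rewrite E !edge1.
  by move/perm_inj => /(congr1 val) /= [].
have leE : forall x y : X, (x <= y) = (x == y) || (x == r).
  move=> x y; case: (eqVneq x r) => [->|xr].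
    rewrite orbT; case: (eqVneq r y) => [->|ry]; first exact: lexx.
    by apply: ltW; apply: rlt; rewrite eq_sym.
  rewrite orbF; case: (eqVneq x y) => [->|xy]; first exact: lexx.
  apply/negP; rewrite le_eqVlt => /orP [/eqP E|xly]; first by rewrite E eqxx in xy.
  exact: (@no3 d X len _ _ _ (rlt x xr) xly).
left; exists (perm finj); split.
  move=> x y; rewrite !permE !leE (inj_eq finj).
  by case: (eqVneq x r) => [->|xr]; [rewrite fr eqxx !orbT | rewrite (negbTE (fn x xr))].
move=> b; rewrite !permE [val (th b)]surjective_pairing !edge1 fr; congr (_, _).
have h : (r, (val b).2).1 < (r, (val b).2).2 by rewrite -(edge1 b) (valP b).
rewrite (fE _ h); congr (val (th _)).2; apply: val_inj; rewrite /= -(edge1 b).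
by rewrite -surjective_pairing.
Qed.

Lemma starP_max d (X : finPOrderType d) : poset_length X = 1%N ->
  #|Max_set X| = 1%N -> forall th : {perm Bt X}, in_P (fun b => th b).
Proof.
move=> len /eqP/cards1P [r Hr] th.
have maxE : forall z : X, (forall w, ~~ (z < w)) -> z = r.
  move=> z Hz; have : z \in Max_set X by rewrite inE; apply/forallP.
  by rewrite Hr inE => /eqP.
have edge2 : forall b : Bt X, (val b).2 = r.
  move=> b; apply: maxE => w; apply/negP => wb.
  exact: (@no3 d X len _ _ _ (valP b) wb).
have rgt : forall y : X, y != r -> y < r.
  move=> y yr; case: (boolP [forall w, ~~ (y < w)]) => [/forallP H|].
    by rewrite (maxE y H) eqxx in yr.
  rewrite negb_forall => /existsP [z]; rewrite negbK => zy.
  suff <- : z = r by [].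
  apply: maxE => w; apply/negP => wz; exact: (@no3 d X len _ _ _ zy wz).
pose f (y : X) : X := if insub (y, r) is Some b then (val (th b : Bt X)).1 else r.
have fr : f r = r by rewrite /f insubF // ltxx.
have fE : forall y (h : (y, r).1 < (y, r).2), f y = (val (th (Sub (y, r) h : Bt X))).1.
  by move=> y h; rewrite /f insubT.
have fn : forall y, y != r -> f y != r.
  move=> y yr; rewrite (fE y (rgt y yr)).
  set c := th _; have h : (val c).1 < r by rewrite -(edge2 c); exact: valP c.
  by rewrite (lt_eqF h).
have finj : injective f.
  move=> x y.
  case: (eqVneq x r) => [->|xr]; case: (eqVneq y r) => [->|yr] //.
  - by rewrite fr => E; have := fn y yr; rewrite -E eqxx.
  - by rewrite fr => E; have := fn x xr; rewrite E eqxx.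
  rewrite (fE x (rgt x xr)) (fE y (rgt y yr)) => E.
  set cx := th _ in E; set cy := th _ in E.
  have : cx = cy.
    apply: val_inj; rewrite [val cx]surjective_pairing [val cy]surjective_pairing.
    by rewrite E !edge2.
  by move/perm_inj => /(congr1 val) /= [].
have leE : forall x y : X, (x <= y) = (x == y) || (y == r).
  move=> x y; case: (eqVneq y r) => [->|yr].
    rewrite orbT; case: (eqVneq x r) => [->|xr]; first exact: lexx.
    by apply: ltW; apply: rgt.
  rewrite orbF; case: (eqVneq x y) => [->|xy]; first exact: lexx.
  apply/negP; rewrite le_eqVlt => /orP [/eqP E|xly]; first by rewrite E eqxx in xy.
  exact: (@no3 d X len _ _ _ xly (rgt y yr)).
left; exists (perm finj); split.
  move=> x y; rewrite !permE !leE (inj_eq finj).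
  by case: (eqVneq y r) => [->|yr]; [rewrite fr eqxx !orbT | rewrite (negbTE (fn y yr))].
move=> b; rewrite !permE [val (th b)]surjective_pairing !edge2 fr; congr (_, _).
have h : ((val b).1, r).1 < ((val b).1, r).2 by rewrite -(edge2 b) (valP b).
rewrite (fE _ h); congr (val (th _)).1; apply: val_inj; rewrite /= -(edge2 b).
by rewrite -surjective_pairing.
Qed.

Theorem proposition4p6 (d : Order.disp_t) (X : finPOrderType d) :
  poset_connected X -> poset_length X = 1%N ->
  ((forall th : {perm Bt X}, in_M (fun b => th b) <-> in_P (fun b => th b)) <->
   (#|Min_set X| = 1%N \/ #|Max_set X| = 1%N)).
Proof.
move=> conn len; have HM := allM conn len.
split; last first.
  by case=> [Hmin|Hmax] th; split=> _;
    [apply: starP_min | apply: HM | apply: starP_max | apply: HM].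
move=> H.
have HP : forall th : {perm Bt X}, in_P (fun b => th b) by move=> th; apply/(H th)/HM.
have NP := noP4 HP.
have [a [b ab]] := has_edge len.
have n3 := @no3 d X len.
case: (boolP [exists a', (a' != a) && (a' < b)]) => [/existsP [a' /andP [a'a a'b]] | /existsPn Hn].
- right.
  pose S := [set x : X | (x == b) || (x < b)].
  have HS : forall z, z \in S.
    apply: (closed_all conn _ (a := b)); last by rewrite inE eqxx.
    move=> x y; rewrite !inE => /orP [/eqP -> | xb] c.
      case/comparable_ltgtP: c => [bh|hb|E] //; first [by exfalso; exact: n3 ab bh | by rewrite hb orbT | by rewrite -E eqxx].
    case/comparable_ltgtP: c => [xy|yx|E]; last by rewrite -E xb orbT.
      case: (eqVneq y b) => [->|yb] //.
      exfalso; case: (eqVneq x a) => [xa|xa].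
        apply: (NP a' b x y a'b xb xy _ _); [by rewrite xa | by rewrite eq_sym].
      apply: (NP a b x y ab xb xy _ _); [by rewrite eq_sym | by rewrite eq_sym].
    exfalso; exact: n3 yx xb.
  apply/eqP/cards1P; exists b; apply/setP => z; rewrite !inE.
  apply/idP/idP.
    move/forallP => Hz; have := HS z; rewrite inE => /orP [//|zb].
    by have := Hz b; rewrite zb.
  move/eqP ->; apply/forallP => w; apply/negP => bw; exact: n3 ab bw.
- left.
  pose S := [set x : X | (x == a) || (a < x)].
  have HS : forall z, z \in S.
    apply: (closed_all conn _ (a := a)); last by rewrite inE eqxx.
    move=> x y; rewrite !inE => /orP [/eqP -> | ax] c.
      case/comparable_ltgtP: c => [ah|ha|E] //; first [by rewrite ah orbT | by exfalso; exact: n3 ha ab | by rewrite -E eqxx].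
    case/comparable_ltgtP: c => [xy|yx|E]; last by rewrite -E ax orbT.
      exfalso; exact: n3 ax xy.
    case: (eqVneq y a) => [->|ya] //.
    exfalso; case: (eqVneq x b) => [xb|xb].
      by have := Hn y; rewrite ya -xb yx.
    exact: (NP y x a b yx ax ab ya xb).
  apply/eqP/cards1P; exists a; apply/setP => z; rewrite !inE.
  apply/idP/idP.
    move/forallP => Hz; have := HS z; rewrite inE => /orP [//|az].
    by have := Hz a; rewrite az.
  move/eqP ->; apply/forallP => w; apply/negP => wa; exact: n3 wa ab.
Qed.
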